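(* Let $k\ge1$, $n=2k-1$, $T^n=(\mathbb{R}/k\mathbb{Z})^n$, $X_0=\langle\!\langle[0,1]^2\times[0,2]^2\times\cdots\times[0,k-1]^2\times[0,k]\rangle\!\rangle$ and $X_i=X_0+(i,\dots,i)$ for $i\in\mathbb{Z}_k$. Let $I\subseteq\mathbb{Z}_k$ be nonempty, written $I=\{i_0,\dots,i_{\ell-1}\}$ with $0\le i_0<i_1<\cdots<i_{\ell-1}\le k-1$, and set $i_\ell=i_0+k$. For $s\in\{0,\dots,\ell-1\}$ define $C_{I,s}\subset T^n$ as the product, over $t=0,1,\dots,\ell-1$ in order, of the blocks \[B_t=\begin{cases}\{i_t\}\times\prod_{j=i_t+1}^{i_{t+1}-1}[i_t,j]^2\times[i_t,i_{t+1}] & t\neq s,\\[2pt] \prod_{j=i_t+1}^{i_{t+1}-1}[i_t,j]^2\times[i_t,i_{t+1}] & t=s,\end{cases}\] (an empty product contributes no factor). Then \[X_I:=\bigcap_{i\in I}X_i=\bigcup_{s=0}^{\ell-1}\langle\!\langle C_{I,s}\rangle\!\rangle.\] In particular, \[\bigcap_{i\in\mathbb{Z}_k}X_i=\bigcup_{i_*\in\mathbb{Z}_k}\Big\langle\!\Big\langle\{0\}\times\cdots\times\widehat{\{i_*\}}\times\cdots\times\{k-1\}\times\prod_{i=0}^{k-1}[i,i+1]\Big\rangle\!\Big\rangle,\] where the hat indicates that the singleton factor $\{i_*\}$ is omitted (so there are $k-1$ singleton factors followed by $k$ interval factors).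
   Context: For $U\subset T^n$, $\langle\!\langle U\rangle\!\rangle=\{\mathbf{x}_\sigma:\mathbf{x}\in U,\ \sigma\in S_n\}$ with $\mathbf{x}_\sigma=(x_{\sigma(1)},\dots,x_{\sigma(n)})$. $[a,b]^2$ denotes two Cartesian factors equal to $[a,b]$. Products of real intervals and singletons (each block $B_t$ contributes $2(i_{t+1}-i_t)$ or $2(i_{t+1}-i_t)-1$ factors, totaling $n$) are regarded as subsets of $T^n$ via the quotient $\mathbb{R}^n\to(\mathbb{R}/k\mathbb{Z})^n$. $X_0+(i,\dots,i)=\{\mathbf{x}+(i,\dots,i):\mathbf{x}\in X_0\}$. *)

(* Defs.v *)
From mathcomp Require Import all_boot all_order all_algebra perm.
From mathcomp Require Import reals.
Set Implicit Arguments. Unset Strict Implicit. Unset Printing Implicit Defensive.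
Import GRing.Theory Num.Theory.
Local Open Scope ring_scope.

(* Subsets of T^n = (R/kZ)^n are represented as predicates on representatives
   x : 'I_n -> R; all predicates below are invariant under kZ^n translations. *)

(* A "factor list" L : seq (nat * nat) describes the product of closed real
   intervals [a_j, b_j] (a singleton {a} is [a,a]), j = 0..n-1, regarded as a
   subset of T^n via the quotient R^n -> (R/kZ)^n:
   x lies in it iff some representative x - k*m (m in Z^n) lies in the box. *)
Definition box (R : realType) (k n : nat) (L : seq (nat * nat))
    (x : 'I_n -> R) : Prop :=
  exists m : 'I_n -> int, forall j : 'I_n,
    ((nth (0%N, 0%N) L j).1)%:R <= x j - k%:R * (m j)%:~R <=
    ((nth (0%N, 0%N) L j).2)%:R.

Definition symc (R : realType) (n : nat) (U : ('I_n -> R) -> Prop)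
    (y : 'I_n -> R) : Prop :=
  exists s : 'S_n, U (fun j => y (s j)).

Definition shiftc (R : realType) (n : nat) (U : ('I_n -> R) -> Prop) (c : R)
    (y : 'I_n -> R) : Prop :=
  U (fun j => y j - c).

Definition X0_list (k : nat) : seq (nat * nat) :=
  flatten [seq [:: (0%N, j); (0%N, j)] | j <- iota 1 k.-1] ++ [:: (0%N, k)].

Definition Xi (R : realType) (k : nat) (i : 'I_k) : ('I_(2 * k - 1) -> R) -> Prop :=
  shiftc (symc (box k (X0_list k))) (val i)%:R.

Definition idxs (k : nat) (I : {set 'I_k}) : seq nat :=
  sort leq [seq val i | i in I].

Definition itI (k : nat) (I : {set 'I_k}) (t : nat) : nat :=
  if (t < #|I|)%N then nth 0%N (idxs I) t else (head 0%N (idxs I) + k)%N.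

Definition blockI (k : nat) (I : {set 'I_k}) (s t : nat) : seq (nat * nat) :=
  let a := itI I t in let b := itI I t.+1 in
  (if t != s then [:: (a, a)] else [::])
  ++ flatten [seq [:: (a, j); (a, j)] | j <- iota a.+1 (b - a).-1]
  ++ [:: (a, b)].

Definition C_list (k : nat) (I : {set 'I_k}) (s : nat) : seq (nat * nat) :=
  flatten [seq blockI I s t | t <- iota 0 #|I|].

Definition full_list (k : nat) (istar : 'I_k) : seq (nat * nat) :=
  [seq (i, i) | i <- iota 0 k & i != val istar]
  ++ [seq (i, i.+1) | i <- iota 0 k].

(* Main.v *)
Require Import Defs.
From mathcomp Require Import all_boot all_order all_algebra perm.
From mathcomp Require Import reals.
From mathcomp Require Import zify lra.
Import GRing.Theory Num.Theory.
Local Open Scope ring_scope.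

Module M_Work.
Local Close Scope ring_scope.
Import GRing.Theory Num.Theory.
Local Open Scope ring_scope.
Set Implicit Arguments. Unset Strict Implicit.

Lemma count_card n (P : pred nat) : count P (iota 0 n) = #|[set i : 'I_n | P i]|.
Proof.
rewrite -val_enum_ord count_map -sum1_count -sum1_card big_enum_cond /=.
apply: eq_bigl => i; by rewrite inE.
Qed.

Lemma count_nth_card (T : Type) (d : T) (L : seq T) n (P : pred T) :
  size L = n -> count P L = #|[set j : 'I_n | P (nth d L j)]|.
Proof.
move=> hs.
have -> : count P L = count P (mkseq (nth d L) (size L)) by rewrite mkseq_nth.
rewrite hs /mkseq count_map; exact: count_card.
Qed.

Lemma count_iota_lt c m v : count (fun i => (i < v)%N) (iota c m) = minn m (v - c).
Proof.
elim: m c => [|m IH] c /=; first by lia.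
rewrite IH; lia.
Qed.

Lemma card_ord_lt n j : (j <= n)%N -> #|[set i : 'I_n | (i < j)%N]| = j.
Proof.
move=> h; rewrite -(count_card n (fun i => (i < j)%N)) count_iota_lt; lia.
Qed.

Section Cards.
Variable T : finType.
Implicit Types P Q S : pred T.

Lemma card_le_imp P Q : (forall c, P c -> Q c) ->
  (#|[set c | P c]| <= #|[set c | Q c]|)%N.
Proof.
move=> h; apply: subset_leq_card; apply/subsetP => c; rewrite !inE; exact: h.
Qed.

Lemma card_disj P Q S : (forall c, P c -> Q c -> False) ->
  (forall c, P c || Q c -> S c) ->
  (#|[set c | P c]| + #|[set c | Q c]| <= #|[set c | S c]|)%N.
Proof.
move=> hd hu; rewrite -cardsUI.
have -> : [set c | P c] :&: [set c | Q c] = set0.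
  apply/setP => c; rewrite !inE; apply/negP => /andP [h1 h2]; exact: hd c h1 h2.
rewrite cards0 addn0; apply: subset_leq_card; apply/subsetP => c.
rewrite !inE; exact: hu.
Qed.

Lemma card_cover P Q S : (forall c, S c -> P c || Q c) ->
  (#|[set c | S c]| <= #|[set c | P c]| + #|[set c | Q c]|)%N.
Proof.
move=> h; rewrite -cardsUI; apply: leq_trans (leq_addr _ _).
apply: subset_leq_card; apply/subsetP => c; rewrite !inE; exact: h.
Qed.

Lemma card_all P : (forall c, P c) -> #|[set c | P c]| = #|T|.
Proof. move=> h; apply: eq_card => c; by rewrite inE h. Qed.

Lemma card_none P : (forall c, ~~ P c) -> #|[set c | P c]| = 0%N.
Proof.
move=> h; apply/eqP; rewrite cards_eq0; apply/eqP/setP => c; rewrite !inE.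
exact: negbTE (h c).
Qed.

Lemma card_compl P : (#|[set c | P c]| + #|[set c | ~~ P c]|)%N = #|T|.
Proof.
apply/eqP; rewrite eqn_leq; apply/andP; split.
- rewrite -(card_all (P := predT)) //; apply: card_disj => c //. by move=> ->.
- rewrite -(card_all (P := predT)) //; apply: card_cover => c _; by case: (P c).
Qed.

End Cards.

End M_Work.
Import M_Work.

Module M_WorkA.
Local Close Scope ring_scope.
Import Order.TTheory GRing.Theory Num.Theory.
Local Open Scope ring_scope.
Set Implicit Arguments. Unset Strict Implicit.

Definition le2 (e f : nat * nat) := ((e.1 <= f.1)%N && (e.2 <= f.2)%N).
Definition cbL (L : seq (nat * nat)) (v : nat) := count (fun e : nat * nat => (e.2 <= v)%N) L.
Definition caL (L : seq (nat * nat)) (v : nat) := count (fun e : nat * nat => (e.1 < v)%N) L.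

Section LemA.
Variables (R : realType) (k n : nat).

Definition congr_k (p x : 'I_n -> R) :=
  forall c, exists z : int, p c = x c - k%:R * z%:~R.
Definition condU L (p : 'I_n -> R) :=
  forall v : nat, (cbL L v <= #|[set c | (p c <= v%:R)%R]|)%N.
Definition condL L (p : 'I_n -> R) :=
  forall v : nat, (#|[set c | (p c < v%:R)%R]| <= caL L v)%N.

Lemma A_fwd L x : size L = n -> symc (box k L) x ->
  exists p, [/\ congr_k p x, condU L p & condL L p].
Proof.
move=> hs [s [m hm]].
exists (fun c => x c - k%:R * (m (s^-1 c)%g)%:~R).
have hp : forall j, x (s j) - k%:R * (m (s^-1 (s j))%g)%:~R = x (s j) - k%:R * (m j)%:~R.
  by move=> j; rewrite permK.
split.
- by move=> c; exists (m (s^-1 c)%g).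
- move=> v; rewrite /cbL (count_nth_card (0%N, 0%N) _ hs).
  rewrite -(card_imset _ (@perm_inj _ s)); apply: subset_leq_card.
  apply/subsetP => c /imsetP [j]; rewrite !inE => hj ->.
  rewrite hp; case/andP: (hm j) => _ h; apply: le_trans h _; by rewrite ler_nat.
- move=> v; rewrite /caL (count_nth_card (0%N, 0%N) _ hs).
  rewrite -(card_imset _ (@perm_inj _ (s^-1)%g)); apply: subset_leq_card.
  apply/subsetP => j /imsetP [c]; rewrite !inE => hc ->.
  have := hm ((s^-1)%g c); rewrite permKV => /andP [h _].
  rewrite -(ltr_nat R); apply: le_lt_trans h hc.
Qed.

Lemma sort_perm (p : 'I_n -> R) :
  exists t : 'S_n, forall i j : 'I_n, (i <= j)%N -> p (t i) <= p (t j).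
Proof.
set le := fun c d : 'I_n => p c <= p d.
set s := sort le (enum 'I_n).
have hperm : perm_eq s (enum 'I_n) by rewrite perm_sort.
have hsz : size s = n by rewrite (perm_size hperm) size_enum_ord.
have hu : uniq s by rewrite (perm_uniq hperm) enum_uniq.
have hsort : sorted le s by apply: sort_sorted => a b; exact: le_total.
pose f := fun i : 'I_n => nth i s i.
have hf : injective f.
  move=> i j; rewrite /f (set_nth_default i j) ?hsz ?ltn_ord //.
  move/eqP; rewrite nth_uniq ?hsz ?ltn_ord // => /eqP; exact: val_inj.
exists (perm hf) => i j hij; rewrite !permE /f.
rewrite [nth i s i](set_nth_default j) ?hsz ?ltn_ord //.
have htr : transitive le by move=> b a c h1 h2; exact: le_trans h1 h2.
have hrf : reflexive le by move=> a; exact: lexx.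
have H := sorted_leq_nth htr hrf j hsort.
apply: H => //; rewrite inE /= hsz; exact: ltn_ord.
Qed.

Lemma A_bwd L x p : size L = n -> pairwise le2 L -> congr_k p x ->
  condU L p -> condL L p -> symc (box k L) x.
Proof.
move=> hs hpw hc hU hL.
have hmono : forall i j : nat, (i <= j)%N -> (j < n)%N ->
    le2 (nth (0%N, 0%N) L i) (nth (0%N, 0%N) L j).
  move=> i j hij hj; move: hij; rewrite leq_eqVlt => /orP [/eqP -> | hij].
    by rewrite /le2 !leqnn.
  by apply: (pairwiseP (0%N, 0%N) hpw) => //; rewrite inE hs //; lia.
have [z hz] := fin_all_exists hc.
have [t ht] := sort_perm p.
exists t; exists (fun j => z (t j)) => j.
rewrite -hz; apply/andP; split.
- rewrite leNgt; apply/negP => hlt.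
  set a := (nth (0%N, 0%N) L j).1 in hlt.
  have h1 : (j.+1 <= #|[set c | (p c < a%:R)%R]|)%N.
    apply: leq_trans (eq_leq (esym (@card_ord_lt n j.+1 (ltn_ord j)))) _.
    rewrite -(card_imset _ (@perm_inj _ t)); apply: subset_leq_card.
    apply/subsetP => c /imsetP [i]; rewrite !inE => hi ->.
    apply: le_lt_trans hlt; apply: ht; lia.
  have h2 : (caL L a <= j)%N.
    rewrite /caL (count_nth_card (0%N, 0%N) _ hs).
    apply: leq_trans _ (eq_leq (@card_ord_lt n j (ltnW (ltn_ord j)))).
    apply: card_le_imp => i hi; rewrite ltnNge; apply/negP => hji.
    have := hmono _ _ hji (ltn_ord i); rewrite /le2 => /andP [h _].
    rewrite /a in hi; lia.
  have := hL a; lia.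
- rewrite leNgt; apply/negP => hlt.
  set b := (nth (0%N, 0%N) L j).2 in hlt.
  have h1 : (#|[set c | (p c <= b%:R)%R]| <= j)%N.
    apply: leq_trans _ (eq_leq (@card_ord_lt n j (ltnW (ltn_ord j)))).
    apply: leq_trans _ (eq_leq (card_imset [set i : 'I_n | (i < j)%N] (@perm_inj _ t))).
    apply: subset_leq_card.
    apply/subsetP => c; rewrite inE => hcb; apply/imsetP; exists ((t^-1)%g c); last by rewrite permKV.
    rewrite inE ltnNge; apply/negP => hji.
    have := ht _ _ hji; rewrite permKV => h.
    have := lt_le_trans hlt h; by rewrite ltNge hcb.
  have h2 : (j.+1 <= cbL L b)%N.
    rewrite /cbL (count_nth_card (0%N, 0%N) _ hs).
    apply: leq_trans (eq_leq (esym (@card_ord_lt n j.+1 (ltn_ord j)))) _.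
    apply: card_le_imp => i hi.
    have := hmono i j _ (ltn_ord j); rewrite /le2 => /(_ ltac:(lia)) /andP [_ h].
    exact: h.
  have := hU b; lia.
Qed.

End LemA.

End M_WorkA.
Import M_WorkA.

Module M_WorkR.
Local Close Scope ring_scope.
Import Order.TTheory GRing.Theory Num.Theory.
Local Open Scope ring_scope.
Set Implicit Arguments. Unset Strict Implicit.

Section Rep.
Variables (R : realType) (k : nat).
Hypothesis hk : (0 < k)%N.

Lemma kR_gt0 : 0 < (k%:R : R).
Proof. by rewrite ltr0n. Qed.

Definition rep (b : R) (y : R) : R := y - k%:R * (Num.floor ((y - b) / k%:R))%:~R.

Lemma rep_win b y : b <= rep b y < b + k%:R.
Proof.
rewrite /rep; set f := Num.floor _.
have /andP [h1 h2] := floor_itv ((y - b) / k%:R); rewrite -/f in h1 h2.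
rewrite ler_pdivlMr ?kR_gt0 // in h1.
rewrite ltr_pdivrMr ?kR_gt0 // intrD mulrDl mul1r in h2.
apply/andP; split; lra.
Qed.

Lemma rep_cong b y : exists z : int, rep b y = y - k%:R * z%:~R.
Proof. by exists (Num.floor ((y - b) / k%:R)). Qed.

Lemma win_uniq (lo w1 w2 : R) (z : int) : w1 = w2 + k%:R * z%:~R ->
  lo <= w1 < lo + k%:R -> lo <= w2 < lo + k%:R -> w1 = w2.
Proof.
move=> e /andP [h1 h2] /andP [h3 h4].
have kp := kR_gt0.
have : (z <= -1)%R \/ z = 0 \/ (1 <= z)%R by lia.
case=> [hz|[hz0|hz]].
- have : (z%:~R : R) <= (-1)%:~R by rewrite ler_int.
  rewrite mulrN1z => hz'. nra.
- by rewrite e hz0 mulr0 addr0.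
- have : (1 : R) <= z%:~R by rewrite ler1z.
  move=> hz'; nra.
Qed.

End Rep.

Section Rep2.
Variables (R : realType) (k : nat).
Hypothesis hk : (0 < k)%N.

Lemma cong_eq (lo w y r : R) (z z' : int) : w = y - k%:R * z%:~R -> r = y - k%:R * z'%:~R ->
  lo <= w < lo + k%:R -> lo <= r < lo + k%:R -> w = r.
Proof.
move=> e1 e2 h1 h2; apply: (win_uniq hk (z := z' - z)) h1 h2.
rewrite e1 e2 intrB mulrBr; lra.
Qed.

End Rep2.

End M_WorkR.
Import M_WorkR.

Module M_WorkB.
Local Close Scope ring_scope.
Set Implicit Arguments. Unset Strict Implicit.

Definition PP (a : nat) (s : seq nat) : seq (nat * nat) :=
  flatten [seq [:: (a, j); (a, j)] | j <- s].

Definition blk (f : bool) (a b : nat) : seq (nat * nat) :=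
  (if f then [:: (a, a)] else [::]) ++ PP a (iota a.+1 (b - a).-1) ++ [:: (a, b)].

Lemma X0_blk k : X0_list k = blk false 0 k.
Proof. by rewrite /X0_list /blk subn0. Qed.

Lemma count_PP a s (P : pred (nat * nat)) :
  count P (PP a s) = 2 * count (fun j => P (a, j)) s.
Proof. elim: s => [|j s IH] //=; rewrite IH; lia. Qed.

Lemma size_PP a s : size (PP a s) = 2 * size s.
Proof. by rewrite -(count_predT (PP a s)) count_PP count_predT. Qed.

Lemma mem_PP a s e : e \in PP a s -> e.1 = a /\ e.2 \in s.
Proof.
elim: s => [|j s IH] //=; rewrite !inE => /orP [/eqP -> | /orP [/eqP -> | h]].
- by rewrite eqxx.
- by rewrite eqxx.
- by case: (IH h) => -> ->; rewrite orbT.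
Qed.

Lemma pairwise_flatten (T : eqType) (r : T -> T -> bool) (B : nat -> seq T) (s : seq nat) :
  pairwise ltn s -> (forall t, t \in s -> pairwise r (B t)) ->
  (forall t t', t \in s -> t' \in s -> (t < t')%N -> allrel r (B t) (B t')) ->
  pairwise r (flatten [seq B t | t <- s]).
Proof.
elim: s => [|t s IH] //= /andP [hall hpw] hB hBB.
rewrite pairwise_cat; apply/and3P; split.
- apply/allrelP => x y hx /flatten_mapP [t' ht' hy].
  have := hBB t t'; rewrite !inE eqxx ht' orbT => /(_ isT isT).
  move: hall => /allP /(_ _ ht') /= htt' /(_ htt') /allrelP; exact.
- by apply: hB; rewrite inE eqxx.
- apply: IH => //.
  + by move=> t' ht'; apply: hB; rewrite inE ht' orbT.
  + by move=> t1 t2 h1 h2; apply: hBB; rewrite inE ?h1 ?h2 orbT.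
Qed.

Lemma pairwise_iota c m : pairwise ltn (iota c m).
Proof. by rewrite -sorted_pairwise ?iota_ltn_sorted //; exact: ltn_trans. Qed.

Lemma pairwise_PP a c m : pairwise le2 (PP a (iota c m)).
Proof.
apply: pairwise_flatten; first exact: pairwise_iota.
- by move=> t _ /=; rewrite /le2 /= !leqnn.
- move=> t t' _ _ h.
  by rewrite /allrel /= /le2 /= leqnn ltnW.
Qed.

Section Blk.
Variables (f : bool) (a b : nat).
Hypothesis hab : (a < b)%N.

Lemma size_blk : size (blk f a b) = (f + 2 * (b - a) - 1)%N.
Proof. rewrite /blk !size_cat size_PP size_iota; case: f => /=; lia. Qed.

Lemma cb_blk v : cbL (blk f a b) v = (f && (a <= v)) + 2 * minn (b - a).-1 (v - a) + (b <= v).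
Proof.
rewrite /cbL /blk !count_cat count_PP /=.
have -> : count (fun j => (j <= v)%N) (iota a.+1 (b - a).-1) = minn (b - a).-1 (v - a).
  have -> : count (fun j => (j <= v)%N) (iota a.+1 (b - a).-1) =
            count (fun j => (j < v.+1)%N) (iota a.+1 (b - a).-1) by [].
  by rewrite count_iota_lt subSS.
case: f => /=; lia.
Qed.

Lemma ca_blk v : caL (blk f a b) v = if (a < v)%N then size (blk f a b) else 0%N.
Proof.
rewrite /caL; case: ifP => h.
- by rewrite -count_predT; apply: eq_in_count => e /=; rewrite /blk !mem_cat => /or3P [| /mem_PP [-> _] | ];
    [case: f => //=; rewrite inE => /eqP -> | | rewrite inE => /eqP ->].
- apply/eqP; rewrite -leqn0 leqNgt -has_count; apply/hasPn => e.
  rewrite /blk !mem_cat => /or3P [| /mem_PP [-> _] | ];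
    [case: f => //=; rewrite inE => /eqP -> | | rewrite inE => /eqP ->]; by rewrite /= h.
Qed.

Lemma mem_blk e : e \in blk f a b -> e.1 = a /\ (a <= e.2 <= b)%N.
Proof.
rewrite /blk !mem_cat => /or3P [| /mem_PP [-> ] | ].
- case: f => //=; rewrite inE => /eqP -> /=; by rewrite leqnn ltnW.
- rewrite mem_iota => /andP [h1 h2]; split => //; lia.
- rewrite inE => /eqP -> /=; by rewrite leqnn ltnW.
Qed.

Lemma pairwise_blk : pairwise le2 (blk f a b).
Proof.
rewrite /blk !pairwise_cat pairwise_PP /=; apply/and4P; split => //.
- case: f => //=; apply/allrelP => e e'; rewrite inE => /eqP ->.
  rewrite mem_cat => /orP [/mem_PP [h1] | ].
  + rewrite mem_iota /le2 /= h1 leqnn => /andP [h _]; exact: ltnW.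
  + rewrite inE => /eqP -> ; by rewrite /le2 /= leqnn ltnW.
- by case: f.
- apply/allrelP => e e' /mem_PP [h0]; rewrite mem_iota inE => /andP [h1 h2] /eqP -> .
  rewrite /le2 /= h0 leqnn /=; move: (e.2) h1 h2 => y; lia.
Qed.

End Blk.

End M_WorkB.
Import M_WorkB.

Module M_WorkI.
Local Close Scope ring_scope.
Set Implicit Arguments. Unset Strict Implicit.

Lemma locate (f : nat -> nat) (L v : nat) : (f 0 <= v < f L)%N ->
  exists2 T, (T < L)%N & (f T <= v < f T.+1)%N.
Proof.
elim: L => [|L IH] h; first by lia.
case: (ltnP v (f L)) => hv.
- have [T hT hT'] := IH ltac:(lia); exists T => //; lia.
- exists L => //; lia.
Qed.

Section Idx.
Variables (k : nat) (I : {set 'I_k}).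
Hypothesis hI : I != set0.

Lemma ell_gt0 : (0 < #|I|)%N.
Proof. by rewrite card_gt0. Qed.

Lemma size_idxs : size (idxs I) = #|I|.
Proof. by rewrite /idxs size_sort /image_mem size_map -cardE. Qed.

Lemma sorted_idxs : sorted ltn (idxs I).
Proof.
rewrite ltn_sorted_uniq_leq sort_uniq sort_sorted ?andbT; last exact: leq_total.
rewrite /image_mem map_inj_uniq ?enum_uniq //; exact: val_inj.
Qed.

Lemma mem_idxs x : x \in idxs I -> exists2 i : 'I_k, i \in I & val i = x.
Proof.
rewrite /idxs mem_sort => /imageP [i hi ->]; by exists i.
Qed.

Lemma idxs_mem (i : 'I_k) : i \in I -> val i \in idxs I.
Proof. by move=> hi; rewrite /idxs mem_sort; apply/imageP; exists i. Qed.

Lemma itI_lt_k t : (t < #|I|)%N -> (itI I t < k)%N.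
Proof.
move=> ht; rewrite /itI ht.
have : nth 0%N (idxs I) t \in idxs I by rewrite mem_nth ?size_idxs.
by case/mem_idxs => i _ <-; exact: ltn_ord.
Qed.

Lemma itI_in t (ht : (t < #|I|)%N) : Ordinal (itI_lt_k ht) \in I.
Proof.
have : nth 0%N (idxs I) t \in idxs I by rewrite mem_nth ?size_idxs.
case/mem_idxs => i hi e.
suff -> : Ordinal (itI_lt_k ht) = i by [].
apply: val_inj => /=; by rewrite /itI ht e.
Qed.

Lemma itI_surj (i : 'I_k) : i \in I -> exists2 t, (t < #|I|)%N & itI I t = val i.
Proof.
move=> hi; have hm := idxs_mem hi.
exists (index (val i) (idxs I)); first by rewrite -size_idxs index_mem.
by rewrite /itI -size_idxs index_mem hm nth_index.
Qed.

Lemma itI_ell : itI I #|I| = (itI I 0 + k)%N.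
Proof. by rewrite /itI ltnn ell_gt0 nth0. Qed.

Lemma itI_mono t t' : (t < t')%N -> (t' <= #|I|)%N -> (itI I t < itI I t')%N.
Proof.
move=> h1 h2; rewrite leq_eqVlt in h2; case/orP: h2 => [/eqP e | h2].
- rewrite e in h1 *; rewrite itI_ell; have := itI_lt_k h1.
  have := itI_lt_k ell_gt0; lia.
- rewrite /itI h2 (ltn_trans h1 h2).
  have := sorted_ltn_nth ltn_trans 0%N sorted_idxs.
  move=> /(_ t t'); rewrite !inE size_idxs; apply => //; exact: ltn_trans h1 h2.
Qed.

Lemma itI_le t t' : (t <= t')%N -> (t' <= #|I|)%N -> (itI I t <= itI I t')%N.
Proof.
rewrite leq_eqVlt => /orP [/eqP -> // | h] h'; apply: ltnW; exact: itI_mono.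
Qed.

Lemma locI v : (itI I 0 <= v < itI I 0 + k)%N ->
  exists2 T, (T < #|I|)%N & (itI I T <= v < itI I T.+1)%N.
Proof. move=> h; apply: locate; by rewrite itI_ell. Qed.

End Idx.

End M_WorkI.
Import M_WorkI.

Module M_WorkX.
Local Close Scope ring_scope.
Import Order.TTheory GRing.Theory Num.Theory.
Local Open Scope ring_scope.
Set Implicit Arguments. Unset Strict Implicit.

Lemma card_ge1 (T : finType) (P : pred T) c : P c -> (0 < #|[set c | P c]|)%N.
Proof. by move=> h; apply/card_gt0P; exists c; rewrite inE. Qed.

Lemma card_le0_false (T : finType) (P : pred T) c : P c -> (#|[set c | P c]| <= 0)%N -> False.
Proof. move=> h; have := card_ge1 h; lia. Qed.

Lemma card_full_all (T : finType) (P : pred T) c : (#|T| <= #|[set c | P c]|)%N -> P c.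
Proof.
move=> h; apply/negPn/negP => hc; have := card_ge1 (P := fun c => ~~ P c) hc.
have := card_compl P; lia.
Qed.

Section X0.
Variables (k : nat).
Hypothesis hk : (0 < k)%N.
Local Notation n := (2 * k - 1)%N.

Lemma size_X0 : size (X0_list k) = n.
Proof. by rewrite X0_blk size_blk // subn0. Qed.

Lemma pairwise_X0 : pairwise le2 (X0_list k).
Proof. by rewrite X0_blk pairwise_blk. Qed.

Lemma cb_X0_lt v : (v < k)%N -> cbL (X0_list k) v = (2 * v)%N.
Proof. move=> h; rewrite X0_blk cb_blk //; lia. Qed.

Lemma cb_X0_ge v : (k <= v)%N -> cbL (X0_list k) v = n.
Proof. move=> h; rewrite X0_blk cb_blk //; lia. Qed.

Lemma ca_X0 v : caL (X0_list k) v = if (0 < v)%N then n else 0%N.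
Proof. by rewrite X0_blk ca_blk // size_blk // subn0. Qed.

End X0.

Section R1.
Variables (R : realType) (k : nat).
Hypothesis hk : (0 < k)%N.
Local Notation n := (2 * k - 1)%N.
Variables (x : 'I_n -> R) (b i : nat).
Hypothesis hbi : (b <= i < b + k)%N.

Local Notation r := (fun c => rep k b%:R (x c)).
Definition F0 (v : nat) := #|[set c | rep k b%:R (x c) <= v%:R]|.
Definition G0 (v : nat) := #|[set c | rep k b%:R (x c) < v%:R]|.

Lemma r_win c : b%:R <= r c < b%:R + k%:R.
Proof. exact: rep_win. Qed.

Lemma R1_fwd : shiftc (symc (box k (X0_list k))) i%:R x ->
  forall v : nat, (b <= v < b + k)%N -> (G0 i + 2 * v + (v < i) <= F0 v + 2 * i)%N.
Proof.
rewrite /shiftc => /(A_fwd (size_X0 hk)) [p [hc hU hL]] v hv.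
have p_ge0 : forall c, 0 <= p c.
  move=> c; rewrite leNgt; apply/negP => hlt.
  apply: (card_le0_false (P := fun c => p c < (0%N)%:R) hlt).
  by have := hL 0%N; rewrite ca_X0.
have p_lek : forall c, p c <= k%:R.
  move=> c; apply: (card_full_all (P := fun c => p c <= k%:R)).
  by have := hU k; rewrite cb_X0_ge // card_ord.
have hrc : forall c, exists z : int, r c = x c - k%:R * z%:~R by move=> c; exact: rep_cong.
case: (leqP i v) => hiv.
- have hj : (v - i < k)%N by lia.
  have := hU (v - i)%N; rewrite cb_X0_lt //.
  have := @card_disj _ (fun c => p c <= (v - i)%N%:R) (fun c => r c < i%:R) (fun c => r c <= v%:R).
  rewrite -/(G0 i) -/(F0 v) => H; have {H} := H _ _.
  have key : forall c, p c <= (v - i)%N%:R -> r c = p c + i%:R.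
    move=> c hpc; have [z hz] := hc c; have [z' hz'] := hrc c.
    have e1 : p c + i%:R = x c - k%:R * z%:~R by rewrite hz /=; lra.
    apply/esym; apply: (cong_eq hk e1 hz' _ (r_win c)).
    rewrite natrB // in hpc; have := p_ge0 c.
      have : b%:R <= i%:R :> R by rewrite ler_nat; lia.
      have : v%:R < b%:R + k%:R :> R by rewrite -natrD ltr_nat; lia.
      move=> *; apply/andP; split; lra.
  have hd : forall c, p c <= (v - i)%N%:R -> r c < i%:R -> False.
    move=> c hpc; rewrite (key c hpc); have := p_ge0 c; move=> *; lra.
  have hu : forall c, (p c <= (v - i)%N%:R) || (r c < i%:R) -> r c <= v%:R.
    move=> c /orP [hpc | hri].
    - rewrite (key c hpc); rewrite natrB // in hpc; lra.
    - have : i%:R <= v%:R :> R by rewrite ler_nat.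
      move=> *; lra.
  have := @card_disj _ (fun c => p c <= (v - i)%N%:R) (fun c => r c < i%:R) (fun c => r c <= v%:R) hd hu.
  rewrite -/(G0 i) -/(F0 v); lia.
- set j := (v + k - i)%N.
  have hj : (j < k)%N by rewrite /j; lia.
  have := hU j; rewrite cb_X0_lt //.
  have key : forall c, p c <= j%:R -> ~~ (r c < i%:R) || (r c <= v%:R).
    move=> c hpc; have [z hz] := hc c; have [z' hz'] := hrc c.
    have e1 : p c + i%:R = x c - k%:R * z%:~R by rewrite hz /=; lra.
    have hjR : j%:R = v%:R + k%:R - i%:R :> R by rewrite /j natrB ?natrD //; lia.
    have hbiR : b%:R <= i%:R :> R by rewrite ler_nat; lia.
    have hvR : v%:R < i%:R :> R by rewrite ltr_nat.
    have hbvR : b%:R <= v%:R :> R by rewrite ler_nat; lia.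
    have hp0 := p_ge0 c.
    have hvbk : v%:R < b%:R + k%:R :> R by rewrite -natrD ltr_nat; lia.
    case: (ltP (p c + i%:R) (b%:R + k%:R)) => hw.
    + have e := cong_eq hk e1 hz' _ (r_win c).
      rewrite -e; last by apply/andP; split; lra.
      by rewrite -leNgt lerDr hp0.
    + have e2 : p c + i%:R - k%:R = x c - k%:R * (z + 1)%:~R by rewrite intrD; lra.
      have e := cong_eq hk e2 hz' _ (r_win c).
      rewrite -e; last by apply/andP; split; lra.
      apply/orP; right; lra.
  have := @card_cover _ (fun c => ~~ (r c < i%:R)) (fun c => r c <= v%:R) (fun c => p c <= j%:R) key.
  have := card_compl (fun c => r c < i%:R); rewrite card_ord -/(G0 i) -/(F0 v).
  rewrite /j; lia.
Qed.

Lemma R1_bwd : (forall v : nat, (b <= v < b + k)%N -> (G0 i + 2 * v + (v < i) <= F0 v + 2 * i)%N) ->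
  shiftc (symc (box k (X0_list k))) i%:R x.
Proof.
move=> H; rewrite /shiftc.
have hrc : forall c, exists z : int, r c = x c - k%:R * z%:~R by move=> c; exact: rep_cong.
pose p c := if i%:R <= r c then r c - i%:R else r c - i%:R + k%:R.
have hbiR : b%:R <= i%:R :> R by rewrite ler_nat; lia.
have hibR : i%:R < b%:R + k%:R :> R by rewrite -natrD ltr_nat; lia.
have pw : forall c, 0 <= p c < k%:R.
  move=> c; have /andP [h1 h2] := r_win c; rewrite /p; case: ifP => h; apply/andP; split; lra.
apply: (A_bwd (size_X0 hk) (pairwise_X0 hk) (p := p)).
- move=> c; have [z hz] := hrc c; rewrite /p; case: ifP => _;
    [exists z | exists (z - 1)]; rewrite ?intrB hz /=; lra.
- move=> v; case: (leqP k v) => hkv.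
  + rewrite cb_X0_ge // card_all ?card_ord // => c.
    have /andP [_ h] := pw c; have : k%:R <= v%:R :> R by rewrite ler_nat.
    move=> *; lra.
  + rewrite cb_X0_lt //.
    case: (ltnP (i + v) (b + k)) => hw.
    * have := H (i + v)%N ltac:(lia).
      have hcov : forall c, r c <= (i + v)%N%:R -> (r c < i%:R) || (p c <= v%:R).
        move=> c hc; rewrite /p; case: (ltP (r c) i%:R) => //= hri.
        rewrite natrD in hc; lra.
      have := @card_cover _ (fun c => r c < i%:R) (fun c => p c <= v%:R) (fun c => r c <= (i + v)%N%:R) hcov.
      rewrite /= -/(G0 i) -/(F0 (i + v)).
      move: (#|[set c | (p c <= v%:R)%R]|) => A; lia.
    * set v' := (i + v - k)%N.
      have := H v' ltac:(rewrite /v'; lia).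
      have hv'i : (v' < i)%N by rewrite /v'; lia.
      have hv'R : v'%:R = i%:R + v%:R - k%:R :> R by rewrite /v' natrB ?natrD //; lia.
      have hv'iR : v'%:R < i%:R :> R by rewrite ltr_nat.
      have hwR : b%:R + k%:R <= i%:R + v%:R :> R by rewrite -!natrD ler_nat.
      have hd : forall c, ~~ (r c < i%:R) -> r c <= v'%:R -> False.
        move=> c; rewrite -leNgt => h1 h2; lra.
      have hu : forall c, ~~ (r c < i%:R) || (r c <= v'%:R) -> p c <= v%:R.
        move=> c; have /andP [h1 h2] := r_win c; rewrite /p.
        case: (ltP (r c) i%:R) => hri /= h; lra.
      have := @card_disj _ (fun c => ~~ (r c < i%:R)) (fun c => r c <= v'%:R) (fun c => p c <= v%:R) hd hu.
      have := card_compl (fun c => r c < i%:R); rewrite /= card_ord -/(G0 i) -/(F0 v').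
      move: (#|[set c | (p c <= v%:R)%R]|) => A; rewrite /v'; lia.
- move=> v; rewrite (ca_X0 hk); case: ifP => hv.
  + apply: leq_trans (max_card _) _; by rewrite card_ord.
  + rewrite card_none // => c; have /andP [h _] := pw c.
    have -> : v = 0%N by lia.
    by rewrite -leNgt.
Qed.

End R1.

End M_WorkX.
Import M_WorkX.

Module M_WorkC.
Local Close Scope ring_scope.
Set Implicit Arguments. Unset Strict Implicit.

Lemma sum_split3 (F : nat -> nat) T L : (T < L)%N ->
  \sum_(0 <= t < L) F t = \sum_(0 <= t < T) F t + F T + \sum_(T.+1 <= t < L) F t.
Proof.
move=> h; rewrite (@big_cat_nat _ _ _ T) //=; last exact: ltnW.
by rewrite (@big_ltn _ _ _ T) // addnA.
Qed.

Lemma sum0 (F : nat -> nat) m n : (forall t, (m <= t < n)%N -> F t = 0%N) ->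
  \sum_(m <= t < n) F t = 0%N.
Proof. by move=> h; rewrite (eq_big_nat _ _ h) big1_eq. Qed.

Section CL.
Variables (k : nat) (I : {set 'I_k}) (s : nat).
Hypothesis hI : I != set0.
Hypothesis hs : (s < #|I|)%N.
Local Notation i := (itI I).
Local Notation l := #|I|.

Lemma blockI_blk t : blockI I s t = blk (t != s) (i t) (i t.+1).
Proof. by []. Qed.

Lemma it_step t : (t < l)%N -> (i t < i t.+1)%N.
Proof. by move=> h; apply: itI_mono. Qed.

Definition full t := ((t != s) + 2 * (i t.+1 - i t) - 1)%N.

Lemma size_block t : (t < l)%N -> size (blockI I s t) = full t.
Proof. by move=> h; rewrite blockI_blk size_blk // it_step. Qed.

Lemma P_eq T : (T <= l)%N -> (\sum_(0 <= t < T) full t + (s < T))%N = (2 * (i T - i 0))%N.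
Proof.
elim: T => [|T IH] h; first by rewrite big_geq //; lia.
rewrite big_nat_recr //=.
have := IH (ltnW h); have := it_step h; have := itI_le hI (leq0n T) (ltnW h).
rewrite /full; lia.
Qed.

Lemma count_C (Q : pred (nat * nat)) :
  count Q (C_list I s) = \sum_(0 <= t < l) count Q (blockI I s t).
Proof.
rewrite /C_list count_flatten -map_comp sumnE big_map.
by rewrite /index_iota subn0.
Qed.

Lemma cb_full v t : (t < l)%N -> (i t.+1 <= v)%N -> cbL (blockI I s t) v = full t.
Proof.
move=> ht hv; have h1 := it_step ht.
rewrite blockI_blk cb_blk // /full; lia.
Qed.

Lemma cb_zero v t : (t < l)%N -> (v < i t)%N -> cbL (blockI I s t) v = 0%N.
Proof.
move=> ht hv; have h1 := it_step ht.
rewrite blockI_blk cb_blk //; lia.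
Qed.

Lemma cbC_mid v T : (T < l)%N -> (i T <= v < i T.+1)%N ->
  cbL (C_list I s) v = (2 * (v - i 0) + (T < s))%N.
Proof.
move=> hT hv; rewrite /cbL count_C (sum_split3 _ hT).
rewrite (@eq_big_nat _ _ _ 0 T _ full); last first.
  move=> t /andP [_ ht]; apply: cb_full; first by lia.
  have := itI_le hI (ht : t.+1 <= T)%N (ltnW hT); lia.
rewrite (@sum0 _ T.+1); last first.
  move=> t /andP [ht1 ht2]; apply: cb_zero => //.
  have := itI_mono hI (ht1 : T < t)%N (ltnW ht2); have := itI_le hI ht1 (ltnW ht2); lia.
have := P_eq (ltnW hT); have := it_step hT; have := itI_le hI (leq0n T) (ltnW hT).
rewrite -/(cbL _ v) blockI_blk cb_blk ?it_step //; lia.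
Qed.

Lemma cbC_small v : (v < i 0)%N -> cbL (C_list I s) v = 0%N.
Proof.
move=> hv; rewrite /cbL count_C sum0 // => t /andP [_ ht]; apply: cb_zero => //.
have := itI_le hI (leq0n t) (ltnW ht); lia.
Qed.

Lemma sizeC : size (C_list I s) = (2 * k - 1)%N.
Proof.
rewrite -count_predT count_C (@eq_big_nat _ _ _ 0 l _ full); last first.
  by move=> t /andP [_ ht]; rewrite count_predT size_block.
have := P_eq (leqnn l); rewrite itI_ell //; lia.
Qed.

Lemma cbC_big v : (i 0 + k <= v)%N -> cbL (C_list I s) v = (2 * k - 1)%N.
Proof.
move=> hv; rewrite /cbL count_C (@eq_big_nat _ _ _ 0 l _ full); last first.
  move=> t /andP [_ ht]; apply: cb_full => //.
  have := itI_le hI (ht : t.+1 <= l)%N (leqnn _); rewrite itI_ell //; lia.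
have := P_eq (leqnn l); rewrite itI_ell //; lia.
Qed.

Lemma ca_full v t : (t < l)%N -> (i t < v)%N -> caL (blockI I s t) v = full t.
Proof.
move=> ht hv; have h1 := it_step ht.
by rewrite blockI_blk ca_blk // hv size_blk.
Qed.

Lemma ca_zero v t : (t < l)%N -> (v <= i t)%N -> caL (blockI I s t) v = 0%N.
Proof.
move=> ht hv; have h1 := it_step ht.
rewrite blockI_blk ca_blk //; case: ifP => //; lia.
Qed.

Lemma caC_mid v T : (T < l)%N -> (i T < v <= i T.+1)%N ->
  caL (C_list I s) v = \sum_(0 <= t < T.+1) full t.
Proof.
move=> hT hv; rewrite /caL count_C (@big_cat_nat _ _ _ T.+1) //=.
rewrite (@sum0 _ T.+1 l); last first.
  move=> t /andP [ht1 ht2]; apply: ca_zero => //.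
  have := itI_le hI ht1 (ltnW ht2); lia.
rewrite addn0; apply: eq_big_nat => t /andP [_ ht]; apply: ca_full; first by lia.
have := itI_le hI (ht : t <= T)%N (ltnW hT); lia.
Qed.

Lemma caC_small v : (v <= i 0)%N -> caL (C_list I s) v = 0%N.
Proof.
move=> hv; rewrite /caL count_C sum0 // => t /andP [_ ht]; apply: ca_zero => //.
have := itI_le hI (leq0n t) (ltnW ht); lia.
Qed.

Lemma pairwise_C : pairwise le2 (C_list I s).
Proof.
rewrite /C_list; apply: pairwise_flatten; first exact: pairwise_iota.
- move=> t ht; rewrite mem_iota in ht; by rewrite blockI_blk pairwise_blk // it_step //; lia.
- move=> t t' ht ht' htt; rewrite mem_iota in ht; rewrite mem_iota in ht'.
  have hb : (i t < i t.+1)%N by apply: it_step; lia.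
  have hb' : (i t' < i t'.+1)%N by apply: it_step; lia.
  apply/allrelP => e e'.
  rewrite !blockI_blk => /(mem_blk hb) [he1 he2] /(mem_blk hb') [he1' he2'].
  have ht2 : (t' <= l)%N by case/andP: ht' => _; rewrite add0n => /ltnW.
  have := itI_le hI (htt : t.+1 <= t')%N ht2.
  rewrite /le2 he1 he1'; move: (e.2) (e'.2) he2 he2' => y y'; lia.
Qed.

End CL.

End M_WorkC.
Import M_WorkC.

Module M_WorkM.
Local Close Scope ring_scope.
Import Order.TTheory GRing.Theory Num.Theory.
Local Open Scope ring_scope.
Set Implicit Arguments. Unset Strict Implicit.

Lemma last_argmax (f : nat -> int) L : (0 < L)%N ->
  exists s, [/\ (s < L)%N, (forall u, (u < L)%N -> (f u <= f s)%R) &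
                 (forall u, (s < u < L)%N -> (f u < f s)%R)].
Proof.
elim: L => [|L IH] // _.
case: (posnP L) => [-> | hL].
  exists 0%N; split => // u hu; last by lia.
  by have -> : u = 0%N by lia.
have [s [hs h1 h2]] := IH hL.
case: (lerP (f s) (f L)) => hfs.
- exists L; split => //; last by lia.
  move=> u hu; case: (ltnP u L) => hu'; first exact: le_trans (h1 _ hu') hfs.
  by have -> : u = L by lia.
- exists s; split => //; first lia.
  + move=> u hu; case: (ltnP u L) => hu'; first exact: h1.
    have -> : u = L by lia. exact: ltW.
  + move=> u /andP [hu1 hu2]; case: (ltnP u L) => hu'; first by apply: h2; lia.
    by have -> : u = L by lia.
Qed.

Lemma subset_card (T : finType) (A : {set T}) q : (q <= #|A|)%N ->
  exists B : {set T}, B \subset A /\ #|B| = q.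
Proof.
elim: q => [|q IH] h; first by exists set0; rewrite sub0set cards0.
have [B [hBA hB]] := IH (ltnW h).
have : (0 < #|A :\: B|)%N by rewrite cardsD (setIidPr hBA); lia.
case/card_gt0P => a; rewrite inE => /andP [haB haA].
exists (a |: B); split.
- by rewrite subUset sub1set haA hBA.
- by rewrite cardsU1 haB hB.
Qed.

Lemma cardsB (T : finType) (B : {set T}) : #|[set c | c \in B]| = #|B|.
Proof. by apply: eq_card => c; rewrite inE. Qed.

Section Main.
Variables (R : realType) (k : nat).
Hypothesis hk : (0 < k)%N.
Local Notation n := (2 * k - 1)%N.
Variables (I : {set 'I_k}) (x : 'I_n -> R).
Hypothesis hI : I != set0.
Local Notation i := (itI I).
Local Notation l := #|I|.
Local Notation i0 := (itI I 0).
Local Notation r := (fun c => rep k i0%:R (x c)).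

Lemma i_win u : (u < l)%N -> (i0 <= i u < i0 + k)%N.
Proof.
move=> hu; have := itI_le hI (leq0n u) (ltnW hu); have := itI_lt_k hu; lia.
Qed.

Lemma C_to_X s : (s < l)%N -> symc (box k (C_list I s)) x ->
  forall u, (u < l)%N -> forall v : nat, (i0 <= v < i0 + k)%N ->
  (G0 x i0 (i u) + 2 * v + (v < i u) <= F0 x i0 v + 2 * i u)%N.
Proof.
move=> hs /(A_fwd (sizeC hI hs)) [p [hc hU hL]] u hu v hv.
have hrc : forall c, exists z : int, r c = x c - k%:R * z%:~R by move=> c; exact: rep_cong.
have p_ge : forall c, i0%:R <= p c.
  move=> c; rewrite leNgt; apply/negP => hlt.
  apply: (card_le0_false (P := fun c => p c < i0%:R) hlt).
  by have := hL i0; rewrite (caC_small hI hs).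
have p_le : forall c, p c <= (i0 + k)%N%:R.
  move=> c; apply: (card_full_all (P := fun c => p c <= (i0 + k)%N%:R)).
  by have := hU (i0 + k)%N; rewrite (cbC_big hI hs) // card_ord.
have hkR := kR_gt0 R hk.
have cls : forall c, (p c < (i0 + k)%N%:R -> p c = r c) /\
                     ((i0 + k)%N%:R <= p c -> r c = i0%:R).
  move=> c; have [z hz] := hc c; have [z' hz'] := hrc c.
  have hw := rep_win (R:=R) hk i0%:R (x c).
  have := p_ge c; have := p_le c; rewrite natrD => h1 h2.
  split => h.
  - apply: (cong_eq hk hz hz' _ hw); apply/andP; split; lra.
  - have e2 : p c - k%:R = x c - k%:R * (z + 1)%:~R by rewrite hz intrD; lra.
    have := cong_eq hk e2 hz' _ hw.
    move=> /(_ ltac:(apply/andP; split; lra)) e; lra.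
set q := #|[set c | (i0 + k)%N%:R <= p c]|.
have [T hT hvT] := locI hI hv.
have hU' := hU v; rewrite (cbC_mid hI hs hT hvT) in hU'.
have ha : (#|[set c | (p c <= v%:R)%R]| + q <= F0 x i0 v)%N.
  apply: card_disj => c.
  - move=> h1 h2; have : v%:R < (i0 + k)%N%:R :> R by rewrite ltr_nat; lia.
    move=> *; lra.
  - case/orP => h.
    + have : v%:R < (i0 + k)%N%:R :> R by rewrite ltr_nat; lia.
      move=> h'; rewrite -(proj1 (cls c)) //; lra.
    + rewrite (proj2 (cls c)) // ler_nat; lia.
have hTu : (v < i u)%N -> (T < u)%N.
  move=> h; rewrite ltnNge; apply/negP => hle.
  have := itI_le hI hle (ltnW hT); lia.
case: (posnP u) => hu0.
- have -> : G0 x i0 (i u) = 0%N.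
    rewrite hu0 /G0 card_none // => c; rewrite -leNgt.
    by have /andP [h _] := rep_win (R:=R) hk i0%:R (x c).
  move: hU' ha; rewrite hu0 in hTu *; move: (#|[set c | p c <= v%:R]|) => A; lia.
- have hb : (G0 x i0 (i u) <= #|[set c | (p c < (i u)%:R)%R]| + q)%N.
    apply: card_cover => c h.
    case: (ltP (p c) (i0 + k)%N%:R) => hp.
    + by rewrite (proj1 (cls c)) // h.
    + by rewrite orbT.
  have hL' := hL (i u).
  have hm : (i u.-1 < i u <= i u.-1.+1)%N.
    have hpu : (u.-1 < u)%N by lia.
    have := itI_mono hI hpu (ltnW hu); rewrite prednK // => ->; by rewrite leqnn.
  rewrite (caC_mid hI hs (_ : u.-1 < l)%N hm) ?prednK // in hL'; last by lia.
  have := P_eq hI hs (ltnW hu).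
  move: hU' ha hb hL'; move: (#|[set c | p c <= v%:R]|) (#|[set c | p c < (i u)%:R]|) => A B.
  have := itI_le hI (leq0n u) (ltnW hu).
  lia.
Qed.

Lemma X_to_C : (forall u, (u < l)%N -> forall v : nat, (i0 <= v < i0 + k)%N ->
  (G0 x i0 (i u) + 2 * v + (v < i u) <= F0 x i0 v + 2 * i u)%N) ->
  exists2 s, (s < l)%N & symc (box k (C_list I s)) x.
Proof.
move=> H.
pose E u : int := ((G0 x i0 (i u))%:Z + (2 * i0)%:Z - (2 * i u)%:Z)%R.
have [s [hs hmax hlast]] := last_argmax E (ell_gt0 hI).
have hrw := rep_win (R:=R) hk i0%:R.
have hkR := kR_gt0 R hk.
have hG00 : G0 x i0 i0 = 0%N.
  rewrite /G0 card_none // => c; rewrite -leNgt; by have /andP [h _] := hrw (x c).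
have hE0 := hmax 0%N (ell_gt0 hI); rewrite /E hG00 in hE0.
have hEs : forall u, (u < l)%N -> (G0 x i0 (i u) + 2 * i0 + 2 * i s <= G0 x i0 (i s) + 2 * i0 + 2 * i u)%N.
  move=> u hu; have := hmax u hu; rewrite /E; lia.
have hEl : forall u, (s < u < l)%N -> (G0 x i0 (i u) + 2 * i0 + 2 * i s < G0 x i0 (i s) + 2 * i0 + 2 * i u)%N.
  move=> u hu; have := hlast u hu; rewrite /E; lia.
have hwin_s := i_win hs.
set q := (G0 x i0 (i s) + 2 * i0 - 2 * i s)%N.
have hqF : (q <= #|[set c | (r c <= i0%:R)%R]|)%N.
  have := H s hs i0 ltac:(lia); rewrite /q /F0 /=; lia.
have [B [hB hBc]] := subset_card hqF.
have hBr : forall c, c \in B -> r c <= i0%:R.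
  by move=> c hc; have := subsetP hB c hc; rewrite inE.
pose p c := if c \in B then r c + k%:R else r c.
exists s => //.
apply: (A_bwd (sizeC hI hs) (pairwise_C hI hs) (p := p)).
- move=> c; have [z hz] := rep_cong (R:=R) k i0%:R (x c); rewrite /p; case: ifP => _;
    [exists (z - 1) | exists z]; rewrite ?intrB hz /=; lra.
- move=> v.
  case: (ltnP v i0) => hv0; first by rewrite (cbC_small hI hs hv0).
  case: (ltnP v (i0 + k)) => hv1.
  + have [T hT hvT] := locI hI (v := v) ltac:(lia).
    rewrite (cbC_mid hI hs hT hvT).
    have hcov : forall c, r c <= v%:R -> (p c <= v%:R) || (c \in B).
      by move=> c hc; rewrite /p; case: (c \in B); rewrite ?orbT ?hc.
    have := card_cover hcov; rewrite cardsB hBc.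
    have := H s hs v ltac:(lia).
    have hTs : (T < s)%N -> (v < i s)%N.
      move=> h; have := itI_le hI (h : T.+1 <= s)%N (ltnW hs); lia.
    rewrite /F0 /=; move: (#|[set c | (p c <= v%:R)%R]|) => A.
    rewrite /q; lia.
  + rewrite (cbC_big hI hs) // card_all ?card_ord // => c.
    have hvR : (i0 + k)%N%:R <= v%:R :> R by rewrite ler_nat.
    rewrite natrD in hvR; rewrite /p; case: ifP => hc.
    * have := hBr c hc; lra.
    * have /andP [_ h] := hrw (x c); lra.
- move=> v.
  have p_ge : forall c, r c <= p c by move=> c; rewrite /p; case: ifP => _ //; lra.
  case: (leqP v i0) => hv0.
  + rewrite card_none // => c; rewrite -leNgt.
    have /andP [h _] := hrw (x c); have : v%:R <= i0%:R :> R by rewrite ler_nat.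
    have := p_ge c; move=> *; lra.
  + have hsum : (\sum_(0 <= t < l) full I s t + 1 = 2 * k)%N.
      have := P_eq hI hs (leqnn l); rewrite itI_ell //; lia.
    case: (leqP v (i0 + k)) => hv1.
    * have [T hT hvT] := locI hI (v := v.-1) ltac:(lia).
      have hm : (i T < v <= i T.+1)%N by lia.
      rewrite (caC_mid hI hs hT hm).
      case: (ltnP T.+1 l) => hT1.
      - have hP := P_eq hI hs (ltnW hT1).
        have hmono : (#|[set c | (p c < v%:R)%R]| <= #|[set c | (p c < (i T.+1)%:R)%R]|)%N.
          apply: card_le_imp => c h; have : v%:R <= (i T.+1)%:R :> R by rewrite ler_nat; lia.
          move=> *; lra.
        have hwT1 := i_win hT1.
        have hd : forall c, p c < (i T.+1)%:R -> c \in B -> False.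
          move=> c h hc; move: h; rewrite /p hc; have /andP [h1 _] := hrw (x c).
          have : (i T.+1)%:R < i0%:R + k%:R :> R by rewrite -natrD ltr_nat; lia.
          move=> *; lra.
        have hu : forall c, (p c < (i T.+1)%:R) || (c \in B) -> r c < (i T.+1)%:R.
          move=> c /orP [h | hc].
          + have := p_ge c; lra.
          + have := hBr c hc; have : i0%:R < (i T.+1)%:R :> R.
              rewrite ltr_nat; have := itI_le hI (leq0n T) (ltnW hT); lia.
            move=> *; lra.
        have := card_disj hd hu; rewrite cardsB hBc -/(G0 x i0 (i T.+1)).
        have := hEs T.+1 hT1.
        have hsT : (s < T.+1)%N -> (G0 x i0 (i T.+1) + 2 * i0 + 2 * i s < G0 x i0 (i s) + 2 * i0 + 2 * i T.+1)%N.
          by move=> h; apply: hEl; rewrite h.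
        move: hmono hP hsT; move: (#|[set c | (p c < v%:R)%R]|) (#|[set c | (p c < (i T.+1)%:R)%R]|) => A A'.
        have := itI_le hI (leq0n T.+1) (ltnW hT1).
        rewrite /q; lia.
      - have -> : T.+1 = l by lia.
        apply: leq_trans (max_card _) _; rewrite card_ord; lia.
    * have -> : caL (C_list I s) v = (\sum_(0 <= t < l) full I s t)%N.
        rewrite /caL count_C; apply: eq_big_nat => t /andP [_ ht]; apply: ca_full => //.
        have := i_win ht; lia.
      apply: leq_trans (max_card _) _; rewrite card_ord; lia.
Qed.

End Main.

End M_WorkM.
Import M_WorkM.

Module M_WorkF.
Local Close Scope ring_scope.
Import Order.TTheory GRing.Theory Num.Theory.
Local Open Scope ring_scope.
Set Implicit Arguments. Unset Strict Implicit.

Lemma symc_perm (R : realType) k n (L L' : seq (nat * nat)) (x : 'I_n -> R) :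
  size L = n -> perm_eq L' L -> symc (box k L) x -> symc (box k L') x.
Proof.
move=> hs hp [sg [m hm]].
have [Is hIs eL'] := perm_iotaP (0%N, 0%N) hp.
rewrite hs in hIs.
have hsz : size Is = n by rewrite (perm_size hIs) size_iota.
have hu : uniq Is by rewrite (perm_uniq hIs) iota_uniq.
have hlt : forall j : 'I_n, (nth 0%N Is j < n)%N.
  move=> j; have : nth 0%N Is j \in iota 0 n by rewrite -(perm_mem hIs) mem_nth ?hsz.
  by rewrite mem_iota.
pose f := fun j : 'I_n => insubd j (nth 0%N Is j).
have hf : forall j, val (f j) = nth 0%N Is j by move=> j; rewrite val_insubd hlt.
have finj : injective f.
  move=> j1 j2 e; have := congr1 val e; rewrite !hf => /eqP.
  rewrite nth_uniq ?hsz // => /eqP; exact: val_inj.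
pose t := perm finj.
exists (t * sg)%g; exists (fun j => m (t j)) => j.
rewrite permM.
have -> : nth (0%N, 0%N) L' j = nth (0%N, 0%N) L (t j).
  by rewrite eL' (nth_map 0%N) ?hsz // /t permE hf.
exact: hm.
Qed.

Section Full.
Variable k : nat.
Hypothesis hk : (0 < k)%N.

Lemma idxs_T : idxs [set: 'I_k] = iota 0 k.
Proof.
rewrite /idxs -(@sorted_sort _ leq leq_trans (iota 0 k)) ?iota_sorted //.
apply/perm_sortP; [exact: leq_total | exact: leq_trans | exact: anti_leq |].
apply: uniq_perm.
- rewrite /image_mem map_inj_uniq ?enum_uniq //; exact: val_inj.
- exact: iota_uniq.
- move=> y; rewrite mem_iota add0n; apply/imageP/idP => [[i _ ->] | hy].
  + exact: ltn_ord.
  + by exists (Ordinal hy); rewrite ?inE.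
Qed.

Lemma card_T : #|[set: 'I_k]| = k.
Proof. by rewrite cardsT card_ord. Qed.

Lemma itI_T t : (t <= k)%N -> itI [set: 'I_k] t = t.
Proof.
move=> ht; rewrite /itI card_T idxs_T.
case: ifP => h; first by rewrite nth_iota.
have -> : t = k by lia.
by case: k hk => //.
Qed.

Lemma C_T s : C_list [set: 'I_k] s =
  flatten [seq (if t != s then [:: (t, t)] else [::]) ++ [:: (t, t.+1)] | t <- iota 0 k].
Proof.
rewrite /C_list card_T; congr flatten; apply/eq_in_map => t; rewrite mem_iota => /andP [_ ht].
rewrite blockI_blk /blk !itI_T //; last by lia.
by rewrite subSn // subnn /= /PP.
Qed.

Lemma count_flat_T (a : pred (nat * nat)) s ts :
  count a (flatten [seq (if t != s then [:: (t, t)] else [::]) ++ [:: (t, t.+1)] | t <- ts]) =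
  (count (fun t => (t != s) && a (t, t)) ts + count (fun t => a (t, t.+1)) ts)%N.
Proof.
elim: ts => [|t ts IH] //=; rewrite count_cat IH; case: (t != s) => /=; lia.
Qed.

Lemma perm_full (istar : 'I_k) : perm_eq (C_list [set: 'I_k] (val istar)) (full_list istar).
Proof.
apply/seq.permP => a; rewrite C_T count_flat_T /full_list count_cat !count_map count_filter.
congr (_ + _)%N; apply: eq_count => t /=; by rewrite andbC.
Qed.

End Full.


End M_WorkF.
Import M_WorkF.

Unset Implicit Arguments.
Set Strict Implicit.

Theorem lemmaL (R : realType) (k : nat) (hk : (1 <= k)%N) :
  (forall (I : {set 'I_k}), I != set0 ->
     forall x : 'I_(2 * k - 1) -> R,
       (forall i : 'I_k, i \in I -> @Xi R k i x) <->
       (exists2 s : nat, (s < #|I|)%N & symc (box k (C_list I s)) x))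
  /\
  (forall x : 'I_(2 * k - 1) -> R,
       (forall i : 'I_k, @Xi R k i x) <->
       (exists istar : 'I_k, symc (box k (full_list istar)) x)).
Proof.
have part1 : forall (I : {set 'I_k}), I != set0 ->
     forall x : 'I_(2 * k - 1) -> R,
       (forall i : 'I_k, i \in I -> @Xi R k i x) <->
       (exists2 s : nat, (s < #|I|)%N & symc (box k (C_list I s)) x).
  move=> I hI x; split.
  - move=> H; apply: (X_to_C hk hI) => u hu v hv.
    apply: (R1_fwd hk (i_win hk hI hu)) => //.
    exact: (H _ (itI_in hu)).
  - move=> [s hs hC] i hi.
    have [u hu e] := itI_surj hi.
    rewrite /Xi -e; apply: (R1_bwd hk (i_win hk hI hu)) => v hv.
    exact: (C_to_X hk hI hs hC hu hv).
split => //.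
move=> x.
have hT : [set: 'I_k] != set0 by apply/set0Pn; exists (Ordinal hk); rewrite inE.
have hsz : forall s, (s < k)%N -> size (C_list [set: 'I_k] s) = (2 * k - 1)%N.
  by move=> s hs; apply: sizeC => //; rewrite card_T.
split.
- move=> H; have [s hs hC] := (part1 _ hT x).1 (fun i _ => H i).
  rewrite card_T in hs.
  exists (Ordinal hs); apply: (symc_perm (hsz s hs)) hC.
  rewrite perm_sym; exact: (perm_full hk (Ordinal hs)).
- move=> [istar hF] i.
  apply: (part1 _ hT x).2; last by rewrite inE.
  exists (val istar); first by rewrite card_T; exact: ltn_ord.
  apply: (symc_perm _ (perm_full hk istar)) hF.
  rewrite -(perm_size (perm_full hk istar)); exact: hsz (ltn_ord istar).
Qed.
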